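(* Let $(A,\mathit{Con},\mid\!\sim)$ be an abstract nonmonotonic system. For every $X\in\mathit{Con}$, $$\bigcap\{\widetilde{Y}\mid Y\in\mathit{Con},\ Y\subseteq X\subseteq\widetilde{Y}\}=\widetilde{X}.$$
   Context: An abstract nonmonotonic system is a triple $(A,\mathit{Con},\mid\!\sim)$ where $\mathit{Con}$ is a collection of finite subsets of $A$ and $\mid\!\sim\ \subseteq\mathit{Con}\times\mathit{Con}$, satisfying: (1) $X\subseteq Y\in\mathit{Con}\Rightarrow X\in\mathit{Con}$; (2) $a\in A\Rightarrow\{a\}\in\mathit{Con}$; (3) $X\mid\!\sim T\Rightarrow X\cup T\in\mathit{Con}$; (4) $Y\subseteq X\Rightarrow X\mid\!\sim Y$; (5) $X\mid\!\sim T$ and $T\cup X\mid\!\sim Y$ imply $X\mid\!\sim Y$; (6) $X\mid\!\sim Y$ and $X\mid\!\sim Z$ imply $X\mid\!\sim Y\cup Z$. For $X\in\mathit{Con}$, $\widetilde{X}:=\{t\in A\mid X\mid\!\sim\{t\}\}$. *)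

(* Defs.v *)
From mathcomp Require Import all_boot.
From mathcomp Require Import boolp classical_sets cardinality.
Set Implicit Arguments. Unset Strict Implicit. Unset Printing Implicit Defensive.
Local Open Scope classical_set_scope.

Record ANS (A : Type) (Con : set (set A)) (nm : set A -> set A -> Prop) : Prop := {
  ans_finite : forall X, Con X -> finite_set X;
  ans_rel_con : forall X Y, nm X Y -> Con X /\ Con Y;
  ans_down : forall X Y, X `<=` Y -> Con Y -> Con X;
  ans_single : forall a : A, Con [set a];
  ans_union : forall X T, nm X T -> Con (X `|` T);
  ans_refl : forall X Y, Con X -> Y `<=` X -> nm X Y;
  ans_cut : forall X T Y, nm X T -> nm (T `|` X) Y -> nm X Y;
  ans_and : forall X Y Z, nm X Y -> nm X Z -> nm X (Y `|` Z)
}.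

Definition tilde (A : Type) (nm : set A -> set A -> Prop) (X : set A) : set A :=
  [set t | nm X [set t]].

(* Main.v *)
Require Import Defs.
From mathcomp Require Import all_boot.
From mathcomp Require Import boolp classical_sets cardinality.
Local Open Scope classical_set_scope.

Lemma and_seq (T : eqType) (Con : set (set T)) (nm : set T -> set T -> Prop)
  (H : ANS Con nm) (Y : set T) (HY : Con Y) (s : seq T) :
  (forall x, x \in s -> nm Y [set x]) -> nm Y [set` s].
Proof.
elim: s => [|a s IH] hs.
  apply: (ans_refl H HY) => x /=; by rewrite in_nil.
have -> : [set` (a :: s)] = [set a] `|` [set` s].
  apply/seteqP; split=> x /=; rewrite in_cons.
    by case/orP => [/eqP ->|]; [left|right].
  by case=> [->|->]; rewrite ?eqxx ?orbT.
apply: (ans_and H); first by apply: hs; rewrite in_cons eqxx.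
by apply: IH => x xs; apply: hs; rewrite in_cons xs orbT.
Qed.

Theorem lemma2 (A : Type) (Con : set (set A)) (nm : set A -> set A -> Prop)
  (H : ANS Con nm) (X : set A) (HX : Con X) :
  \bigcap_(Y in [set Y | Con Y /\ Y `<=` X /\ X `<=` tilde nm Y]) tilde nm Y
  = tilde nm X.
Proof.
apply/seteqP; split=> t.
  move=> Ht; apply: Ht; split=> //; split=> // x Xx.
  by apply: (ans_refl H HX) => y /= ->.
move=> Xt Y [CY [YX XY]].
have YnX : nm Y X.
  have fX := ans_finite H HX.
  have [s Xs] : exists s : seq {classic A}, X = [set` s] by apply/finite_seqP.
  rewrite Xs; apply: (@and_seq {classic A} Con nm H Y CY s) => x xs.
  by apply: XY; rewrite Xs.
apply: (ans_cut H YnX).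
by have -> : X `|` Y = X by apply/seteqP; split=> x //=; [case=> //; apply: YX|left].
Qed.
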